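(* Let $(a_i,b_i)_{i\ge1}$ satisfy $\underline a\le a_i\le\bar a<0$ and $0<\underline b\le b_i\le\bar b$ for all $i$. For $N\ge2$ let $U^*=(u_1^*,\dots,u_N^* )$ be the maximizer of $\sum_{i=1}^N(a_iu_i^2+b_iu_i)$ subject to $\sum_{i=1}^Nu_i=0$, and let $W^*=(w_2^*,\dots,w_N^* )$ be the maximizer of $\sum_{i=2}^N(a_iu_i^2+b_iu_i)$ subject to $\sum_{i=2}^Nu_i=0$. Then there is a constant $C$, independent of $N$, such that $|u_i^*-w_i^*|\le C/N$ for all $2\le i\le N$ and all $N\ge2$; in particular $(u_2^*,\dots,u_N^* )-W^*\to0$ componentwise as $N\to\infty$. *)

(* Defs.v *)
From HB Require Import structures.
From mathcomp Require Import all_boot all_order all_algebra.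
From mathcomp Require Import all_classical all_reals all_analysis.
Set Implicit Arguments. Unset Strict Implicit. Unset Printing Implicit Defensive.
Import Order.TTheory GRing.Theory Num.Theory.
Local Open Scope ring_scope.

(* Objective  sum_{i=m}^{N} (a_i u_i^2 + b_i u_i); vectors are nat -> R,
   only the components m..N matter. *)
Definition obj (R : realType) (a b u : nat -> R) (m N : nat) : R :=
  \sum_(m <= i < N.+1) (a i * u i ^+ 2 + b i * u i).

Definition is_maximizer (R : realType) (a b : nat -> R) (m N : nat) (u : nat -> R) : Prop :=
  \sum_(m <= i < N.+1) u i = 0 /\
  forall v : nat -> R, \sum_(m <= i < N.+1) v i = 0 -> obj a b v m N <= obj a b u m N.

(* Main.v *)
Require Import Defs.
From HB Require Import structures.
From mathcomp Require Import all_boot all_order all_algebra.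
From mathcomp Require Import all_classical all_reals all_analysis.
From mathcomp Require Import ring lra.
Import Order.TTheory GRing.Theory Num.Theory numFieldNormedType.Exports.
Local Open Scope classical_set_scope.
Local Open Scope ring_scope.

Lemma sum2 (R : realType) (m N j k : nat) (G : nat -> R) :
  j != k -> (m <= j <= N)%N -> (m <= k <= N)%N ->
  (forall i, i != j -> i != k -> G i = 0) ->
  \sum_(m <= i < N.+1) G i = G j + G k.
Proof.
move=> njk hj hk hG.
have U : uniq (index_iota m N.+1) by rewrite /index_iota iota_uniq.
rewrite (bigD1_seq j) ?mem_index_iota ?ltnS //=.
rewrite -big_filter (bigD1_seq k) ?mem_filter ?mem_index_iota ?ltnS ?filter_uniq //=;
  last by rewrite eq_sym njk.
rewrite big1_seq ?addr0 // => i /andP[ik]; rewrite mem_filter => /andP[ij _].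
exact: hG.
Qed.

Lemma stat (R : realType) (a b : nat -> R) (m N : nat) (u : nat -> R) :
  (forall i, (m <= i <= N)%N -> a i < 0) -> is_maximizer a b m N u ->
  forall j k, (m <= j <= N)%N -> (m <= k <= N)%N ->
  2 * a j * u j + b j = 2 * a k * u k + b k.
Proof.
move=> han [su opt] j k hj hk.
have [->|njk] := eqVneq j k; first by [].
have nkj : (k == j) = false by rewrite eq_sym (negbTE njk).
have A0 : a j + a k < 0 by have := han j hj; have := han k hk; lra.
pose g := (2 * a j * u j + b j) - (2 * a k * u k + b k).
pose t := - g / (2 * (a j + a k)).
pose v i := u i + (if i == j then t else if i == k then -t else 0).
have sv : \sum_(m <= i < N.+1) v i = 0.
  rewrite big_split /= su add0r.
  rewrite (@sum2 _ _ _ _ _ (fun i => if i == j then t else if i == k then -t else 0) njk hj hk) /=.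
    by rewrite eqxx nkj eqxx subrr.
  by move=> i /negbTE -> /negbTE ->.
have := opt v sv.
rewrite /obj -subr_ge0 -sumrB.
rewrite (@sum2 _ _ _ _ _ (fun i => (a i * u i ^+ 2 + b i * u i) - (a i * v i ^+ 2 + b i * v i)) njk hj hk) /=; last first.
  by move=> i ij ik; rewrite /v (negbTE ij) (negbTE ik) addr0 subrr.
rewrite /v eqxx nkj eqxx.
have -> : a j * u j ^+ 2 + b j * u j - (a j * (u j + t) ^+ 2 + b j * (u j + t)) +
  (a k * u k ^+ 2 + b k * u k - (a k * (u k + - t) ^+ 2 + b k * (u k + - t)))
  = g ^+ 2 / (4 * (a j + a k)).
  rewrite /t /g; field; lra.
move=> H.
have H2 : g ^+ 2 <= 0.
  have -> : g ^+ 2 = g ^+ 2 / (4 * (a j + a k)) * (4 * (a j + a k)) by field; lra.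
  nra.
have : g == 0 by rewrite -sqrf_eq0 eq_le H2 sqr_ge0.
by rewrite /g subr_eq0 => /eqP.
Qed.

Lemma lam_le (R : realType) (a b : nat -> R) (m N : nat) (u : nat -> R) (blo bhi : R) :
  (m <= N)%N -> (forall i, (m <= i <= N)%N -> a i < 0) ->
  (forall i, (m <= i <= N)%N -> blo <= b i <= bhi) ->
  is_maximizer a b m N u -> blo <= 2 * a m * u m + b m <= bhi.
Proof.
move=> hmN han hb hu.
have hm : (m <= m <= N)%N by rewrite leqnn hmN.
have hs i : (m <= i <= N)%N -> 2 * a i * u i + b i = 2 * a m * u m + b m.
  by move=> hi; exact: (@stat _ a b m N u han hu i m hi hm).
have su := hu.1.
rewrite big_ltn ?ltnS // in su.
have hb' := hb m hm.
apply/andP; split.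
- rewrite leNgt; apply/negP => H.
  have pos i : (m <= i <= N)%N -> 0 < u i.
    move=> hi; have := hs i hi; have := han i hi; have := hb i hi; nra.
  have : \sum_(m.+1 <= i < N.+1) (0:R) <= \sum_(m.+1 <= i < N.+1) u i.
    apply: ler_sum_nat => i /andP[h1 h2]; apply/ltW/pos.
    by rewrite ltnS in h2; rewrite h2 ltnW.
  rewrite big1_eq.
  have := pos m hm; lra.
- rewrite leNgt; apply/negP => H.
  have neg i : (m <= i <= N)%N -> u i < 0.
    move=> hi; have := hs i hi; have := han i hi; have := hb i hi; nra.
  have : \sum_(m.+1 <= i < N.+1) u i <= \sum_(m.+1 <= i < N.+1) (0:R).
    apply: ler_sum_nat => i /andP[h1 h2]; apply/ltW/neg.
    by rewrite ltnS in h2; rewrite h2 ltnW.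
  rewrite big1_eq.
  have := neg m hm; lra.
Qed.

Theorem lemma1 (R : realType) (a b : nat -> R) (alo ahi blo bhi : R)
  (hahi : ahi < 0) (hblo : 0 < blo)
  (ha : forall i : nat, (1 <= i)%N -> alo <= a i <= ahi)
  (hb : forall i : nat, (1 <= i)%N -> blo <= b i <= bhi) :
  exists C : R,
    (forall (N : nat) (U W : nat -> R), (2 <= N)%N ->
       is_maximizer a b 1 N U -> is_maximizer a b 2 N W ->
       forall i : nat, (2 <= i <= N)%N -> `|U i - W i| <= C / N%:R)
    /\
    (forall Uf Wf : nat -> nat -> R,
       (forall N : nat, (2 <= N)%N ->
          is_maximizer a b 1 N (Uf N) /\ is_maximizer a b 2 N (Wf N)) ->
       forall i : nat, (2 <= i)%N ->
         (fun N => Uf N i - Wf N i) @ \oo --> (0 : R)).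
Proof.
have han i : (1 <= i)%N -> a i < 0.
  by move=> hi; have := ha i hi; lra.
have ha1 := ha 1%N isT.
have hb1 := hb 1%N isT.
pose C := (bhi - blo) * (- alo) / (ahi ^+ 2).
have part1 : forall (N : nat) (U W : nat -> R), (2 <= N)%N ->
       is_maximizer a b 1 N U -> is_maximizer a b 2 N W ->
       forall i : nat, (2 <= i <= N)%N -> `|U i - W i| <= C / N%:R.
  move=> N U W hN hU hW i /andP[hi2 hiN].
  have hN1 : (1 <= N)%N by apply: leq_trans hN.
  have r1 : (1 <= 1 <= N)%N by rewrite leqnn hN1.
  have r2 : (2 <= 2 <= N)%N by rewrite leqnn hN.
  have hanU k : (1 <= k <= N)%N -> a k < 0 by move=> /andP[h _]; exact: han.
  have hanW k : (2 <= k <= N)%N -> a k < 0 by move=> /andP[h _]; apply: han; apply: leq_trans h.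
  have hbU k : (1 <= k <= N)%N -> blo <= b k <= bhi by move=> /andP[h _]; exact: hb.
  pose mu := 2 * a 1%N * U 1%N + b 1%N.
  pose nu := 2 * a 2%N * W 2%N + b 2%N.
  have hUi k : (1 <= k <= N)%N -> 2 * a k * U k + b k = mu.
    by move=> hk; exact: (@stat _ a b 1 N U hanU hU k 1 hk r1).
  have hWi k : (2 <= k <= N)%N -> 2 * a k * W k + b k = nu.
    by move=> hk; exact: (@stat _ a b 2 N W hanW hW k 2 hk r2).
  have hmu : blo <= mu <= bhi by exact: (@lam_le _ a b 1 N U blo bhi hN1 hanU hbU hU).
  have r12 k : (2 <= k <= N)%N -> (1 <= k <= N)%N.
    by move=> /andP[h1 h2]; rewrite h2 andbT; apply: leq_trans h1.
  have ek k : (2 <= k <= N)%N -> U k - W k = - (mu - nu) * (- (2 * a k))^-1.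
    move=> hk; have := hUi k (r12 k hk); have := hWi k hk; have := hanW k hk.
    move=> ak e2 e1; rewrite -e1 -e2; field; lra.
  pose T := \sum_(2 <= k < N.+1) (- (2 * a k))^-1.
  have U1T : U 1%N = (mu - nu) * T.
    have s1 := hU.1; rewrite big_ltn ?ltnS // in s1.
    have : \sum_(2 <= k < N.+1) (U k - W k) = - U 1%N.
      by rewrite sumrB hW.1 subr0; lra.
    rewrite (eq_big_nat _ _ (F2 := fun k => - (mu - nu) * (- (2 * a k))^-1)); last first.
      by move=> k /andP[h1 h2]; apply: ek; rewrite h1 -ltnS.
    rewrite -mulr_sumr -/T => H; lra.
  have hq : 0 < - alo by have := han 1%N isT; lra.
  have hT : (N%:R - 1) / (2 * - alo) <= T.
    have : \sum_(2 <= k < N.+1) (2 * - alo)^-1 <= T.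
      apply: ler_sum_nat => k /andP[h1 h2].
      have hk := ha k (ltnW h1).
      rewrite lef_pV2 ?posrE; lra.
    rewrite sumr_const_nat subSS => H.
    have E : (2 * - alo)^-1 *+ (N - 1) = (N%:R - 1) / (2 * - alo).
      by rewrite -(mulr_natr _ (N - 1)) natrB // mulrC.
    lra.
  have hn : 2 <= (N%:R : R) by rewrite ler_nat.
  have hT4 : N%:R <= T * (4 * - alo).
    move: hT; rewrite ler_pdivrMr; last lra.
    nra.
  have T0 : 0 <= T by nra.
  set D := `|mu - nu|.
  set X := `|U i - W i|.
  have hik : (2 <= i <= N)%N by rewrite hi2 hiN.
  have hai := ha i (ltnW hi2).
  have hX : X * (- (2 * a i)) = D.
    rewrite /X ek // normrM normfV normrN (gtr0_norm (_ : 0 < - (2 * a i))); last lra.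
    rewrite -/D mulfVK //; lra.
  have hD : D * T * (2 * - ahi) <= bhi - blo.
    have e1 : U 1%N * (- (2 * a 1%N)) = b 1%N - mu by rewrite /mu; ring.
    have := congr1 Num.norm e1; rewrite normrM (gtr0_norm (_ : 0 < - (2 * a 1%N))); last lra.
    rewrite U1T normrM (ger0_norm T0) -/D => e2.
    have : `|b 1%N - mu| <= bhi - blo by rewrite ler_norml; lra.
    have D0 : 0 <= D by exact: normr_ge0.
    have : D * T * (2 * - ahi) <= D * T * - (2 * a 1%N).
      apply: ler_wpM2l; [exact: mulr_ge0 | lra].
    lra.
  have X0 : 0 <= X by exact: normr_ge0.
  have D0 : 0 <= D by exact: normr_ge0.
  rewrite ler_pdivlMr; last lra.
  rewrite /C ler_pdivlMr; last by rewrite expr2; nra.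
  have s1 : X * N%:R * ahi ^+ 2 <= X * (T * (4 * - alo)) * ahi ^+ 2.
    apply: ler_wpM2r; first by rewrite sqr_ge0.
    by apply: ler_wpM2l.
  have s2 : X * (2 * - ahi) <= D by rewrite -hX; apply: ler_wpM2l => //; lra.
  have s3 : X * (2 * - ahi) * (T * (2 * - ahi)) * (- alo) <= D * (T * (2 * - ahi)) * (- alo).
    apply: ler_wpM2r; first lra.
    apply: ler_wpM2r => //; nra.
  apply: le_trans s1 _.
  have -> : X * (T * (4 * - alo)) * ahi ^+ 2 = X * (2 * - ahi) * (T * (2 * - ahi)) * (- alo) by ring.
  apply: le_trans s3 _.
  rewrite mulrA.
  apply: ler_wpM2r; lra.
exists C; split; first exact: part1.
move=> Uf Wf hUW i hi.
apply/cvgrPdist_le => e e0.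
near=> N.
have hN2 : (2 <= N)%N by near: N; exact: nbhs_infty_ge.
have hNi : (i <= N)%N by near: N; exact: nbhs_infty_ge.
have hNC : C / e <= N%:R by near: N; exact: nbhs_infty_ger.
rewrite sub0r normrN.
apply: le_trans (part1 N _ _ hN2 (hUW N hN2).1 (hUW N hN2).2 i _) _.
  by rewrite hi hNi.
have hN0 : (0 : R) < N%:R by rewrite ltr0n; apply: leq_trans hN2.
rewrite ler_pdivrMr //.
by rewrite -ler_pdivrMl // mulrC.
Unshelve. all: end_near.
Qed.
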